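(* Let $k\geq3$ and let $G$ be a $k$-uniform hypergraph; if $k=3$ assume moreover that $G$ is $K_4^{(3)-}$-free. Let $\Pi=(P,\psi_\Pi)$ be a picture over $G$ with $P\subseteq[k]^m$, let $x\in V(G)$, put $\Pi_x=\psi_\Pi^{-1}(x)$, let $n\geq 1$, and let $\mathscr{L}$ be a collection of combinatorial lines in $(\Pi_x)^n$ containing neither tripods nor triangles. Then the amalgamation $\Pi\boxplus\mathscr{L}=(Q,\psi_\Sigma)$, with $Q=\bigcup_{U\in\mathscr{L}}\eta_U^+[P]\subseteq[k]^{mn}$ and $\psi_\Sigma=\bigcup_{U\in\mathscr{L}}\psi_\Pi\circ(\eta_U^+|_P)^{-1}$, is again a picture over $G$.
   Context: $K_4^{(3)-}$ is the 3-uniform hypergraph with four vertices and three edges. Combinatorial lines in $B^n$ for a finite alphabet $B$: sets $\{\eta(a)\colon a\in B\}$ where, for a partition $[n]=C\cup M$ with $M\neq\emptyset$ and $g\colon C\to B$, $\eta(a)$ has $i$-th coordinate $g(i)$ for $i\in C$ and $a$ for $i\in M$; $M$ is the set of moving coordinates of the line. A quasiline in $[k]^N$ is a $k$-element subset $L$ such that in every coordinate the entries of the points of $L$ are all identical or mutually distinct. A picture over $G$ is a pair $(P,\psi)$ with $P\subseteq[k]^m$ for some $m$ and $\psi\colon P\to V(G)$ such that every quasiline $L\subseteq P$ is a combinatorial line and $\psi[L]\in E(G)$. Three distinct lines form a triangle if any two intersect but they have no common point; three distinct lines $L,L',L''$ through a common point form a tripod if the moving coordinates of $L$ are the disjoint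 union of those of $L'$ and $L''$. $\Pi_x\subseteq[k]^m$ is viewed as an alphabet and $([k]^m)^n$ is identified with $[k]^{mn}$ by concatenating blocks. For $U\in\mathscr{L}$ with fixed representation $(C,M,g)$, $g\colon C\to\Pi_x$, the map $\eta_U^+\colon[k]^m\to[k]^{mn}$ sends $a$ to the tuple of blocks whose $c$-th block is $g(c)$ for $c\in C$ and whose $j$-th block is $a$ for $j\in M$. (The maps $\psi_\Pi\circ(\eta_U^+|_P)^{-1}$ agree on common points of their domains, so $\psi_\Sigma$ is a well-defined function $Q\to V(G)$.) *)

(* Defs.v *)
From mathcomp Require Import all_boot.
Set Implicit Arguments. Unset Strict Implicit. Unset Printing Implicit Defensive.

Definition uniform (V : finType) (k : nat) (E : {set {set V}}) : Prop :=
  forall e, e \in E -> #|e| = k.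

(* K_4^{(3)-}: four vertices and three edges.  G contains a copy of it iff
   some 4-set of vertices contains at least three edges (any three
   3-subsets of a 4-set form a copy of K_4^{(3)-}). *)
Definition K4minus_free (V : finType) (E : {set {set V}}) : Prop :=
  ~ exists S : {set V}, #|S| = 4 /\ 3 <= #|[set e in E | e \subset S]|.

(* Points of B^I are functions I -> T, B a subset of T used as alphabet.
   line_pt M g a = eta(a): coordinate i is a if i \in M (moving), g i otherwise. *)
Definition line_pt (I T : finType) (M : {set I}) (g : {ffun I -> T}) (a : T)
  : {ffun I -> T} := [ffun i => if i \in M then a else g i].

(* (M, g) is a representation (C, M, g) of a combinatorial line in B^I,
   with C = ~: M (values of g on M are irrelevant). *)
Definition line_rep (I T : finType) (B : {set T}) (M : {set I}) (g : {ffun I -> T})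
  : Prop := M != set0 /\ (forall i, i \notin M -> g i \in B).

Definition line_of (I T : finType) (B : {set T}) (M : {set I}) (g : {ffun I -> T})
  : {set {ffun I -> T}} := [set line_pt M g a | a in B].

Definition comb_line (I T : finType) (B : {set T}) (L : {set {ffun I -> T}}) : Prop :=
  exists M g, line_rep B M g /\ L = line_of B M g.

Definition quasiline (I : finType) (k : nat) (L : {set {ffun I -> 'I_k}}) : bool :=
  (#|L| == k) &&
  [forall i : I, (#|[set (x : {ffun I -> 'I_k}) i | x in L]| == 1) || (#|[set (x : {ffun I -> 'I_k}) i | x in L]| == #|L|)].

(* A picture over G = (V,E) with point set P in [k]^I (I = 'I_m for [k]^m);
   psi is only relevant on P. *)
Definition picture (I : finType) (k : nat) (V : finType) (E : {set {set V}})
  (P : {set {ffun I -> 'I_k}}) (psi : {ffun I -> 'I_k} -> V) : Prop :=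
  forall L : {set {ffun I -> 'I_k}}, L \subset P -> quasiline L ->
    comb_line [set: 'I_k] L /\ psi @: L \in E.

Lemma blk_lt (n m : nat) (p : 'I_(n * m)) : p %/ m < n.
Proof.
case: m p => [|m] p; first by case: p => p; rewrite muln0.
by rewrite ltn_divLR // (ltn_ord p).
Qed.

Lemma pos_lt (n m : nat) (p : 'I_(n * m)) : p %% m < m.
Proof.
case: m p => [|m] p; first by case: p => p; rewrite muln0.
by rewrite ltn_mod.
Qed.

(* coordinate p = j * m + i of [k]^(n*m) is coordinate i of block j *)
Definition concat_blocks (k m n : nat) (b : {ffun 'I_n -> {ffun 'I_m -> 'I_k}})
  : {ffun 'I_(n * m) -> 'I_k} :=
  [ffun p => b (Ordinal (blk_lt p)) (Ordinal (pos_lt p))].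

Notation pt k m := {ffun 'I_m -> 'I_k}.
(* a fixed representation (M, g) of a line in (Pi_x)^n *)
Notation rep k m n := ({set 'I_n} * {ffun 'I_n -> pt k m})%type.

Definition triangle (T : finType) (L1 L2 L3 : {set T}) : Prop :=
  [/\ L1 != L2, L1 != L3 & L2 != L3] /\
  [/\ L1 :&: L2 != set0, L1 :&: L3 != set0 & L2 :&: L3 != set0] /\
  L1 :&: L2 :&: L3 = set0.

Definition tripod (T I : finType) (L1 L2 L3 : {set T}) (M1 M2 M3 : {set I}) : Prop :=
  [/\ L1 != L2, L1 != L3 & L2 != L3] /\
  L1 :&: L2 :&: L3 != set0 /\
  M1 = M2 :|: M3 /\ [disjoint M2 & M3].

Definition eta_plus (k m n : nat) (U : rep k m n) (a : pt k m)
  : {ffun 'I_(n * m) -> 'I_k} := concat_blocks (line_pt U.1 U.2 a).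

Definition amalg_pts (k m n : nat) (P : {set pt k m}) (calL : {set rep k m n})
  : {set {ffun 'I_(n * m) -> 'I_k}} :=
  \bigcup_(U in calL) [set eta_plus U a | a in P].

(* psi_Sigma = union of psi o (eta_U^+|_P)^{-1}: value psi a for any
   U in calL, a in P with eta_U^+ a = q (outside Q the value is irrelevant,
   we put x0). *)
Definition amalg_psi (k m n : nat) (V : finType) (P : {set pt k m})
  (psi : pt k m -> V) (calL : {set rep k m n}) (x0 : V)
  (q : {ffun 'I_(n * m) -> 'I_k}) : V :=
  match [pick Ua : rep k m n * pt k m |
           (Ua.1 \in calL) && (Ua.2 \in P) && (eta_plus Ua.1 Ua.2 == q)] with
  | Some Ua => psi Ua.2
  | None => x0
  end.

(* Main.v *)
Require Import Defs.
From mathcomp Require Import all_boot zify.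
Set Implicit Arguments. Unset Strict Implicit. Unset Printing Implicit Defensive.

Definition ncst (I : finType) (k : nat) (L : {set {ffun I -> 'I_k}}) (p : I) : bool :=
  [exists q in L, exists q' in L, q p != q' p].

Lemma ncstP (I : finType) (k : nat) (L : {set {ffun I -> 'I_k}}) (p : I) :
  reflect (exists q q', [/\ q \in L, q' \in L & q p != q' p]) (ncst L p).
Proof.
apply: (iffP idP).
  by case/exists_inP => q qL /exists_inP [q' q'L h]; exists q, q'.
by case=> q [q' [qL q'L h]]; apply/exists_inP; exists q => //; apply/exists_inP; exists q'.
Qed.

Lemma ncstN (I : finType) (k : nat) (L : {set {ffun I -> 'I_k}}) (p : I) q q' :
  ~~ ncst L p -> q \in L -> q' \in L -> q p = q' p.
Proof.
move=> hn qL q'L; apply/eqP; apply: contraNT hn => h; apply/ncstP; by exists q, q'.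
Qed.

Lemma quasi_inj (I : finType) (k : nat) (L : {set {ffun I -> 'I_k}}) (p : I) :
  quasiline L -> ncst L p -> {in L &, injective (fun q : {ffun I -> 'I_k} => q p)}.
Proof.
case/andP=> _ /forallP /(_ p) /orP [/cards1P [y hy] | h].
  case/ncstP=> q [q' [qL q'L hne]].
  have h1 : q p \in [set y] by rewrite -hy; apply: imset_f.
  have h2 : q' p \in [set y] by rewrite -hy; apply: imset_f.
  by move: h1 h2 hne; rewrite !inE => /eqP -> /eqP ->; rewrite eqxx.
by move=> _; apply/imset_injP.
Qed.

Lemma comb_agree (I : finType) (k : nat) (L : {set {ffun I -> 'I_k}}) q p p' :
  comb_line [set: 'I_k] L -> q \in L -> ncst L p -> ncst L p' -> q p = q p'.
Proof.
case=> M [g [_ ->]].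
have key : forall r, ncst (line_of [set: 'I_k] M g) r -> r \in M.
  move=> r /ncstP [q1 [q2 [/imsetP [a1 _ ->] /imsetP [a2 _ ->]]]].
  rewrite !ffunE; case: (r \in M) => //; by rewrite eqxx.
move=> /imsetP [a _ ->] /key hp /key hp'.
by rewrite !ffunE hp hp'.
Qed.

Lemma agree_comb (I : finType) (k : nat) (L : {set {ffun I -> 'I_k}}) :
  1 < k -> quasiline L ->
  (forall q p p', q \in L -> ncst L p -> ncst L p' -> q p = q p') ->
  comb_line [set: 'I_k] L.
Proof.
move=> hk qL hag.
have cL : #|L| = k by case/andP: qL => /eqP.
have [q1 [q2 [q1L q2L hne]]] : exists q1 q2, [/\ q1 \in L, q2 \in L & q1 != q2].
  by apply/card_gt1P; rewrite cL.
have [p0 hp0] : exists p0, q1 p0 != q2 p0.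
  apply/existsP; apply: contraNT hne => /existsPn H; apply/eqP/ffunP => p.
  by move: (H p); rewrite negbK => /eqP.
have np0 : ncst L p0 by apply/ncstP; exists q1, q2.
exists [set p | ncst L p], q1; split.
  split; last by move=> *; rewrite inE.
  by apply/set0Pn; exists p0; rewrite inE.
apply/eqP; rewrite eqEcard; apply/andP; split.
  apply/subsetP => q hqL; apply/imsetP; exists (q p0); first by rewrite inE.
  apply/ffunP => p; rewrite ffunE inE; case: (boolP (ncst L p)) => hp.
    by apply: hag.
  exact: (ncstN hp hqL q1L).
by rewrite cL (leq_trans (leq_imset_card _ _)) // cardsT card_ord.
Qed.

Lemma lines_eq (I : finType) (k : nat) (L1 L2 : {set {ffun I -> 'I_k}}) a b :
  comb_line [set: 'I_k] L1 -> comb_line [set: 'I_k] L2 ->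
  a \in L1 -> a \in L2 -> b \in L1 -> b \in L2 -> a != b -> L1 = L2.
Proof.
case=> M1 [g1 [[hM1 _] ->]]; case=> M2 [g2 [[hM2 _] ->]].
move=> /imsetP [s1 _ ->] /imsetP [s2 _ e1] /imsetP [t1 _ ->] /imsetP [t2 _ e2] hne.
have d1 : s1 != t1 by apply: contraNneq hne => ->.
have sub : forall (M M' : {set I}) (g g' : {ffun I -> 'I_k}) (s t s' t' : 'I_k), s != t ->
  line_pt M g s = line_pt M' g' s' -> line_pt M g t = line_pt M' g' t' -> M \subset M'.
  move=> M M' g g' s t s' t' hst es et; apply/subsetP => p pM.
  apply: contraNT hst => pM'.
  move/ffunP: es => /(_ p); move/ffunP: et => /(_ p); rewrite !ffunE pM (negbTE pM') => -> ->.
  by rewrite eqxx.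
have d2 : s2 != t2.
  by apply: contraNneq hne => est; rewrite e1 e2 est.
have eM : M1 = M2.
  by apply/eqP; rewrite eqEsubset (sub _ _ _ _ _ _ _ _ d1 e1 e2) (sub _ _ _ _ _ _ _ _ d2 (esym e1) (esym e2)).
subst M2.
have [p pM] := set0Pn _ hM1.
have es : s1 = s2 by move/ffunP: e1 => /(_ p); rewrite !ffunE pM.
subst s2.
have eg : forall c, line_pt M1 g1 c = line_pt M1 g2 c.
  move=> c; apply/ffunP => r; rewrite !ffunE; case: (boolP (r \in M1)) => // hr.
  by move/ffunP: e1 => /(_ r); rewrite !ffunE (negbTE hr).
by apply: eq_imset.
Qed.


Lemma idx_lt (n m : nat) (j : 'I_n) (i : 'I_m) : j * m + i < n * m.
Proof.
apply: (@leq_trans (j * m + m)); first by rewrite ltn_add2l.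
by rewrite -[X in _ + X]mul1n -mulnDl addn1 leq_mul2r ltn_ord orbT.
Qed.

Definition idx (n m : nat) (j : 'I_n) (i : 'I_m) : 'I_(n * m) := Ordinal (idx_lt j i).

Definition blk (k m n : nat) (q : {ffun 'I_(n * m) -> 'I_k}) (j : 'I_n) : {ffun 'I_m -> 'I_k} :=
  [ffun i => q (idx j i)].

Lemma blk_concat (k m n : nat) (b : {ffun 'I_n -> {ffun 'I_m -> 'I_k}}) j :
  blk (concat_blocks b) j = b j.
Proof.
apply/ffunP => i; rewrite !ffunE; congr (b _ _); apply: val_inj => /=.
  have m0 : 0 < m by apply: (leq_ltn_trans _ (ltn_ord i)).
  by rewrite divnMDl // divn_small // addn0.
by rewrite modnMDl modn_small.
Qed.

Lemma idx_dec (n m : nat) (p : 'I_(n * m)) :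
  p = idx (Ordinal (blk_lt p)) (Ordinal (pos_lt p)).
Proof. by apply: val_inj => /=; rewrite -divn_eq. Qed.

Lemma blk_eta (k m n : nat) (U : rep k m n) a j :
  blk (eta_plus U a) j = if j \in U.1 then a else U.2 j.
Proof. by rewrite /eta_plus blk_concat ffunE. Qed.

Lemma blk_pt (k m n : nat) (q : {ffun 'I_(n * m) -> 'I_k}) (p : 'I_(n * m)) :
  q p = blk q (Ordinal (blk_lt p)) (Ordinal (pos_lt p)).
Proof. by rewrite ffunE -idx_dec. Qed.

Theorem proposition4p5 (k m n : nat) (V : finType) (E : {set {set V}})
  (P : {set {ffun 'I_m -> 'I_k}}) (psi : {ffun 'I_m -> 'I_k} -> V) (x : V)
  (calL : {set ({set 'I_n} * {ffun 'I_n -> {ffun 'I_m -> 'I_k}})}) :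
  3 <= k ->
  uniform k E ->
  (k = 3 -> K4minus_free E) ->
  picture E P psi ->
  1 <= n ->
  (forall U, U \in calL -> line_rep [set p in P | psi p == x] U.1 U.2) ->
  {in calL &, forall U W,
      line_of [set p in P | psi p == x] U.1 U.2 =
      line_of [set p in P | psi p == x] W.1 W.2 -> U = W} ->
  (forall U1 U2 U3, U1 \in calL -> U2 \in calL -> U3 \in calL ->
     ~ tripod (line_of [set p in P | psi p == x] U1.1 U1.2)
              (line_of [set p in P | psi p == x] U2.1 U2.2)
              (line_of [set p in P | psi p == x] U3.1 U3.2) U1.1 U2.1 U3.1) ->
  (forall U1 U2 U3, U1 \in calL -> U2 \in calL -> U3 \in calL ->
     ~ triangle (line_of [set p in P | psi p == x] U1.1 U1.2)
                (line_of [set p in P | psi p == x] U2.1 U2.2)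
                (line_of [set p in P | psi p == x] U3.1 U3.2)) ->
  picture E (amalg_pts P calL) (amalg_psi P psi calL x).
Proof.
move=> hk unif hK4 pic hn hrep hdist htri htria L LQ qL.
set X := [set p in P | psi p == x].
have cL : #|L| = k by case/andP: qL => /eqP.
have [q0 q0L] : exists q0, q0 \in L by apply/card_gt0P; rewrite cL (leq_trans _ hk).
have [[U0 a0] _] : exists Ua : (rep k m n * pt k m)%type, true.
  by move/(subsetP LQ): q0L => /bigcupP [U _ /imsetP [a _ _]]; exists (U, a).
pose f q := odflt (U0, a0) [pick Ua : (rep k m n * pt k m)%type |
   (Ua.1 \in calL) && (Ua.2 \in P) && (eta_plus Ua.1 Ua.2 == q)].
have hf : forall q, q \in L -> [/\ (f q).1 \in calL, (f q).2 \in P,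
    eta_plus (f q).1 (f q).2 = q & amalg_psi P psi calL x q = psi (f q).2].
  move=> q qL'; move/(subsetP LQ): (qL') => /bigcupP [U hU /imsetP [a ha qE]].
  rewrite /f /amalg_psi; case: pickP => [[U' a'] /= /andP[/andP[h1 h2] /eqP h3] | hnone] /=.
    by split.
  by move: (hnone (U, a)); rewrite /= hU ha qE eqxx.
pose MM q := (f q).1.1. pose GG q := (f q).1.2. pose A q := (f q).2.
have blkE : forall q j, q \in L -> blk q j = if j \in MM q then A q else GG q j.
  move=> q j qL'; case: (hf q qL') => _ _ e _.
  by rewrite -{1}e blk_eta.
have psiE : forall q, q \in L -> amalg_psi P psi calL x q = psi (A q).
  by move=> q qL'; case: (hf q qL').
have AP : forall q, q \in L -> A q \in P by move=> q qL'; case: (hf q qL').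
have repq : forall q, q \in L -> line_rep X (MM q) (GG q).
  by move=> q qL'; case: (hf q qL') => h _ _ _; apply: hrep.
have bM : forall q j, q \in L -> j \in MM q -> blk q j = A q.
  by move=> q j qL' h; rewrite blkE // h.
have bX : forall q j, q \in L -> j \notin MM q -> blk q j \in X.
  move=> q j qL' h; rewrite blkE // (negbTE h).
  by case: (repq q qL') => _; apply.
have bXx : forall q j, q \in L -> j \notin MM q -> psi (blk q j) = x.
  by move=> q j qL' h; move: (bX q j qL' h); rewrite inE => /andP [_ /eqP].
have bP : forall q j, q \in L -> blk q j \in P.
  move=> q j qL'; case: (boolP (j \in MM q)) => h; first by rewrite bM // AP.
  by move: (bX q j qL' h); rewrite inE => /andP [].
pose act j := [exists q in L, exists q' in L, blk q j != blk q' j].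
pose Lj j := [set blk q j | q in L].
have actI : forall j, act j -> {in L &, injective (fun q => blk q j)}.
  move=> j /exists_inP [q1 q1L /exists_inP [q2 q2L hne]].
  have [i hi] : exists i, q1 (idx j i) != q2 (idx j i).
    apply/existsP; apply: contraNT hne => /existsPn H; apply/eqP/ffunP => i.
    by rewrite !ffunE; move: (H i); rewrite negbK => /eqP.
  have nc : ncst L (idx j i) by apply/ncstP; exists q1, q2.
  move=> r r' rL r'L e; apply: (quasi_inj qL nc rL r'L).
  by move/ffunP: e => /(_ i); rewrite !ffunE.
have cLj : forall j, act j -> #|Lj j| = k.
  by move=> j hj; move: (actI j hj) => /imset_injP /eqP ->.
have actQ : forall j, act j -> quasiline (Lj j).
  move=> j hj; apply/andP; split; first by rewrite cLj.
  apply/forallP => i.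
  have -> : [set (y : {ffun 'I_m -> 'I_k}) i | y in Lj j] = [set (q : {ffun 'I_(n * m) -> 'I_k}) (idx j i) | q in L].
    by rewrite -imset_comp; apply: eq_imset => q /=; rewrite ffunE.
  rewrite cLj //; case/andP: qL => /eqP cL' /forallP /(_ (idx j i)).
  by rewrite cL'.
have actPic : forall j, act j -> comb_line [set: 'I_k] (Lj j) /\ psi @: Lj j \in E.
  move=> j hj; apply: pic; last by apply: actQ.
  by apply/subsetP => y /imsetP [q qL' ->]; apply: bP.
have actPsi : forall j, act j -> {in L &, injective (fun q => psi (blk q j))}.
  move=> j hj r r' rL r'L e; apply: (actI j hj) => //=.
  have : #|psi @: Lj j| == #|Lj j|.
    by rewrite (unif _ (actPic j hj).2) cLj.
  by move/imset_injP => H; apply: H => //; apply: imset_f.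
have card2 : forall s, s \in L -> exists q1 q2, [/\ q1 \in L :\ s, q2 \in L :\ s & q1 != q2].
  move=> s sL; apply/card_gt1P; move: (cardsD1 s L); rewrite sL cL; lia.
have AGREE : forall j j' s, act j -> act j' -> s \in L ->
    (forall q, q \in L -> q != s -> blk q j = blk q j') -> blk s j = blk s j'.
  move=> j j' s hj hj' sL hq.
  have [q1 [q2 [h1 h2 h12]]] := card2 s sL.
  move: h1 h2; rewrite !in_setD1 => /andP [n1 l1] /andP [n2 l2].
  have eL : Lj j = Lj j'.
    apply: (lines_eq (actPic j hj).1 (actPic j' hj').1 (a := blk q1 j) (b := blk q2 j)).
    - by apply: imset_f.
    - by rewrite hq //; apply: imset_f.
    - by apply: imset_f.
    - by rewrite hq //; apply: imset_f.
    - by apply: contra h12 => /eqP /(actI j hj _ _ l1 l2) ->.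
  have : blk s j \in Lj j' by rewrite -eL; apply: imset_f.
  case/imsetP => q qL' e.
  have [qs|qs] := eqVneq q s; first by move: e; rewrite qs.
  by move: e; rewrite -(hq q qL' qs) => /(actI j hj _ _ sL qL') /eqP; rewrite eq_sym (negbTE qs).
have uniqX : forall j q q', act j -> q \in L -> q' \in L ->
    psi (blk q j) = x -> psi (blk q' j) = x -> q = q'.
  by move=> j q q' hj qL' q'L e e'; apply: (actPsi j hj) => //=; rewrite e e'.
have mov : forall j s q, act j -> s \in L -> q \in L -> psi (blk s j) = x -> q != s -> j \in MM q.
  move=> j s q hj sL qL' hs qs; apply: contraNT qs => hq.
  by apply/eqP; apply: (uniqX j) => //; apply: bXx.
have [j00 hj00] : exists j, act j.
  have [q1 [q2 [q1L q2L hne]]] : exists q1 q2, [/\ q1 \in L, q2 \in L & q1 != q2].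
    by apply/card_gt1P; rewrite cL; lia.
  have [p hp] : exists p, q1 p != q2 p.
    apply/existsP; apply: contraNT hne => /existsPn H; apply/eqP/ffunP => p.
    by move: (H p); rewrite negbK => /eqP.
  exists (Ordinal (blk_lt p)); apply/exists_inP; exists q1 => //; apply/exists_inP; exists q2 => //.
  by apply: contra hp; rewrite (blk_pt q1) (blk_pt q2) => /eqP ->.
have FIN : forall j0, act j0 -> (forall q, q \in L -> psi (A q) = psi (blk q j0)) ->
    (forall j q, act j -> q \in L -> blk q j = blk q j0) ->
    comb_line [set: 'I_k] L /\ amalg_psi P psi calL x @: L \in E.
  move=> j0 hj0 hcol hag; split.
    apply: agree_comb => //; first by lia.
    move=> q p p' qL' np np'.
    have key : forall r, ncst L r -> q r = blk q j0 (Ordinal (pos_lt r)) /\ ncst (Lj j0) (Ordinal (pos_lt r)).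
      move=> r /ncstP [q1 [q2 [q1L q2L hne]]].
      have ha : act (Ordinal (blk_lt r)).
        apply/exists_inP; exists q1 => //; apply/exists_inP; exists q2 => //.
        by apply: contra hne; rewrite (blk_pt q1) (blk_pt q2) => /eqP ->.
      split; first by rewrite [q r]blk_pt (hag _ q ha qL').
      apply/ncstP; exists (blk q1 j0), (blk q2 j0); split; try by apply: imset_f.
      by rewrite -(hag _ q1 ha q1L) -(hag _ q2 ha q2L) -!blk_pt.
    have [e1 n1] := key p np; have [e2 n2] := key p' np'.
    rewrite e1 e2; apply: (comb_agree (actPic j0 hj0).1) => //.
    by apply: imset_f.
  have -> : amalg_psi P psi calL x @: L = psi @: Lj j0.
    rewrite -imset_comp; apply: eq_in_imset => q qL' /=.
    by rewrite psiE // hcol.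
  exact: (actPic j0 hj0).2.
case: (boolP [exists s in L, psi (A s) == x]) => [/exists_inP [s sL /eqP sx] | nox].
  have sxj : forall j, psi (blk s j) = x.
    move=> j; case: (boolP (j \in MM s)) => h; first by rewrite bM.
    by apply: bXx.
  have movs : forall j q, act j -> q \in L -> q != s -> blk q j = A q.
    by move=> j q hj qL' qs; apply: bM => //; apply: (mov j s q).
  apply: (FIN j00 hj00).
  - move=> q qL'; have [->|qs] := eqVneq q s; first by rewrite sx sxj.
    by rewrite movs.
  - move=> j q hj qL'.
    have H : forall r, r \in L -> r != s -> blk r j = blk r j00 by move=> r rL rs; rewrite !movs.
    have [->|qs] := eqVneq q s; last by apply: H.
    by apply: (AGREE j j00 s).
have nox' : forall q, q \in L -> psi (A q) != x.
  by move=> q qL'; apply: contraNN nox => h; apply/exists_inP; exists q.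
case: (boolP [exists j, act j && [forall q in L, j \in MM q]]) => [/existsP [j0 /andP [hj0 /forall_inP allm]] | nom].
  apply: (FIN j0 hj0).
  - by move=> q qL'; rewrite bM // allm.
  - move=> j q hj qL'.
    case: (boolP [exists e in L, j \notin MM e]) => [/exists_inP [e eL he] | noe].
      have H : forall r, r \in L -> r != e -> blk r j = blk r j0.
        move=> r rL re; rewrite !bM ?allm //; apply: (mov j e r) => //; exact: bXx.
      have [->|qe] := eqVneq q e; last by apply: H.
      by apply: (AGREE j j0 e).
    have hm : j \in MM q by apply: contraNT noe => h; apply/exists_inP; exists q.
    by rewrite !bM ?allm.
exfalso.
have exc : forall j, act j -> exists2 e, e \in L & j \notin MM e.
  move=> j hj; move/existsPn: nom => /(_ j); rewrite hj /= => /forall_inPn [e eL he].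
  by exists e.
have movx : forall j e q, act j -> e \in L -> j \notin MM e -> q \in L -> q != e -> j \in MM q.
  by move=> j e q hj eL he qL' qe; apply: (mov j e q) => //; apply: bXx.
have Adist : forall j q q', act j -> q \in L -> q' \in L -> j \in MM q -> j \in MM q' ->
    A q = A q' -> q = q'.
  by move=> j q q' hj qL' q'L h h' e; apply: (actI j hj) => //=; rewrite !bM.
have AeqL : forall l e, ~~ act l -> e \in L -> l \in MM e -> forall q, q \in L -> A q = A e.
  move=> l e nal eL lM q qL'.
  have cst : blk q l = blk e l.
    apply/eqP; apply: contraNT nal => h; apply/exists_inP; exists q => //; apply/exists_inP; by exists e.
  case: (boolP (l \in MM q)) => h.
    by rewrite -(bM q l) // cst // bM.
  have := bXx q l qL' h; rewrite cst // bM // => /eqP; by rewrite (negbTE (nox' e eL)).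
have [j1 [j2 [u [v [[hj1 hj2 uL vL] [hu hv uv]]]]]] : exists j1 j2 u v,
    [/\ act j1, act j2, u \in L & v \in L] /\ [/\ j1 \notin MM u, j2 \notin MM v & u != v].
  have [u uL hu] := exc j00 hj00.
  case: (boolP [exists j, act j && [exists v in L, (j \notin MM v) && (v != u)]])
    => [/existsP [j /andP [hj /exists_inP [v vL /andP [hv vu]]]] | none].
    by exists j00, j, u, v; do !split => //; rewrite eq_sym.
  have onlyu : forall j v, act j -> v \in L -> j \notin MM v -> v = u.
    move=> j v hj vL hv; apply/eqP; apply: contraNT none => vu.
    apply/existsP; exists j; rewrite hj /=; apply/exists_inP; exists v => //; by rewrite hv.
  have [l lM] := set0Pn _ (repq u uL).1.
  have nal : ~~ act l.
    apply/negP => hl; have [e eL he] := exc l hl.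
    by move: (he); rewrite (onlyu l e hl eL he) lM.
  have [q1 [q2 [h1 h2 h12]]] := card2 u uL.
  move: h1 h2; rewrite !in_setD1 => /andP [n1 l1] /andP [n2 l2].
  exfalso; move/negP: h12; apply; apply/eqP; apply: (Adist j00) => //.
  - exact: (movx j00 u).
  - exact: (movx j00 u).
  - by rewrite (AeqL l u nal uL lM q1 l1) (AeqL l u nal uL lM q2 l2).
have m1 : forall q, q \in L -> q != u -> j1 \in MM q by move=> q qL' qu; apply: (movx j1 u).
have m2 : forall q, q \in L -> q != v -> j2 \in MM q by move=> q qL' qv; apply: (movx j2 v).
case: (boolP [exists j, act j && [exists w in L, (j \notin MM w) && (w != u) && (w != v)]])
  => [/existsP [j3 /andP [hj3 /exists_inP [w wL /andP [/andP [hw wu] wv]]]] | none3].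
  have m3 : forall q, q \in L -> q != w -> j3 \in MM q by move=> q qL' qw; apply: (movx j3 w).
  have [k4|k3'] := ltnP 3 k.
    have [q1 [q2 [h1 h2 h12]]] : exists q1 q2, [/\ q1 \in L :\ u :\ v, q2 \in L :\ u :\ v & q1 != q2].
      apply/card_gt1P; move: (cardsD1 u L) (cardsD1 v (L :\ u)).
      rewrite uL in_setD1 vL andbT eq_sym uv cL /= => e1 e2.
      have hk' : 3 < k := k4.
      by rewrite e1 e2 !add1n !ltnS in hk'.
    move: h1 h2; rewrite !in_setD1 => /and3P [n1v n1u l1] /and3P [n2v n2u l2].
    have e1 : forall q, q \in L -> q != u -> q != v -> blk q j1 = blk q j2.
      by move=> q qL' qu qv; rewrite (bM q j1 qL' (m1 q qL' qu)) (bM q j2 qL' (m2 q qL' qv)).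
    have eL : Lj j1 = Lj j2.
      apply: (lines_eq (actPic j1 hj1).1 (actPic j2 hj2).1 (a := blk q1 j1) (b := blk q2 j1)).
      - by apply: imset_f.
      - by rewrite e1 //; apply: imset_f.
      - by apply: imset_f.
      - by rewrite e1 //; apply: imset_f.
      - by apply: contra h12 => /eqP /(actI j1 hj1 _ _ l1 l2) ->.
    have : blk u j2 \in Lj j1 by rewrite eL; apply: imset_f.
    case/imsetP => q qL' e.
    have uj2 : blk u j2 = A u by apply: bM => //; apply: m2.
    have [qu|qu] := eqVneq q u.
      by move: (nox' u uL); rewrite -uj2 e qu (bXx u j1 uL hu) eqxx.
    have [qv|qv] := eqVneq q v.
      have Auv : A u = A v.
        by rewrite -uj2 e qv (bM v j1 vL (m1 v vL _)) // eq_sym.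
      move/negP: uv; apply; apply/eqP; apply: (Adist j3) => //.
      - by apply: m3; rewrite // eq_sym.
      - by apply: m3; rewrite // eq_sym.
    move/negP: (qu); apply; apply/eqP; apply: (actI j2 hj2) => //=.
    by rewrite -(e1 q qL' qu qv) e.
  have k3 : k = 3 by apply/eqP; rewrite eqn_leq k3' hk.
  apply: (hK4 k3).
  pose c q := psi (A q).
  have cinj_j : forall j e, act j -> e \in L -> j \notin MM e -> forall q q', q \in L -> q' \in L ->
      q != e -> q' != e -> c q = c q' -> q = q'.
    move=> j e hj eL he q q' qL' q'L qe q'e hc; apply: (actPsi j hj) => //=.
    by rewrite (bM q j qL' (movx j e q hj eL he qL' qe)) (bM q' j q'L (movx j e q' hj eL he q'L q'e)).
  have cinj : {in L &, injective c}.
    move=> q q' qL' q'L hc.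
    case: (boolP ((q != u) && (q' != u))) => [/andP [a b] | H1].
      exact: (cinj_j j1 u).
    case: (boolP ((q != v) && (q' != v))) => [/andP [a b] | H2].
      exact: (cinj_j j2 v).
    move: H1 H2; rewrite !negb_and !negbK => /orP [] /eqP ea /orP [] /eqP eb.
    - by move: uv; rewrite -ea -eb eqxx.
    - by apply: (cinj_j j3 w) => //; rewrite ?ea ?eb // eq_sym.
    - by apply: (cinj_j j3 w) => //; rewrite ?ea ?eb // eq_sym.
    - by move: uv; rewrite -ea -eb eqxx.
  have hxn : (x \notin c @: L).
    by apply/imsetP => -[q qL' e]; move: (nox' q qL'); rewrite -/(c q) -e eqxx.
  have cc : #|c @: L| == #|L| by apply/imset_injP.
  exists (x |: c @: L); split.
    by rewrite cardsU1 hxn (eqP cc) cL k3.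
  have subS : forall j, act j -> psi @: Lj j \subset x |: c @: L.
    move=> j hj; apply/subsetP => y /imsetP [z /imsetP [q qL' ->] ->]; rewrite !inE.
    case: (boolP (j \in MM q)) => h.
      by rewrite bM // imset_f ?orbT.
    by rewrite bXx // eqxx.
  have Notin : forall j e, act j -> e \in L -> j \notin MM e -> c e \notin psi @: Lj j.
    move=> j e hj eL he; apply/imsetP => -[z /imsetP [q qL' ->] hz].
    have [qe|qe] := eqVneq q e.
      by move: (nox' e eL); rewrite -/(c e) hz qe bXx // eqxx.
    move: (qe); rewrite (cinj e q eL qL') ?eqxx //.
    by rewrite hz /c bM //; apply: (movx j e).
  have In : forall j q, act j -> q \in L -> j \in MM q -> c q \in psi @: Lj j.
    by move=> j q hj qL' h; rewrite /c -(bM q j qL' h); apply: imset_f; apply: imset_f.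
  apply/card_gt2P; exists (psi @: Lj j1), (psi @: Lj j2), (psi @: Lj j3); split.
    by split; rewrite inE ?(actPic j1 hj1).2 ?(actPic j2 hj2).2 ?(actPic j3 hj3).2 subS.
  split; apply/negP => /eqP h.
  - by move: (Notin j1 u hj1 uL hu); rewrite h In //; apply: m2.
  - by move: (Notin j2 v hj2 vL hv); rewrite h In //; apply: m3; rewrite // eq_sym.
  - by move: (Notin j3 w hj3 wL hw); rewrite h In //; apply: m1.
have onlyuv : forall j q, act j -> q \in L -> j \notin MM q -> (q == u) || (q == v).
  move=> j q hj qL' hq; apply: contraNT none3; rewrite negb_or => /andP [qu qv].
  apply/existsP; exists j; rewrite hj /=; apply/exists_inP; exists q => //; by rewrite hq qu qv.
have [w [wL wu wv]] : exists w, [/\ w \in L, w != u & w != v].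
  have : 0 < #|L :\ u :\ v|.
    move: (cardsD1 u L) (cardsD1 v (L :\ u)).
    rewrite uL in_setD1 vL andbT eq_sym uv cL /= => e1 e2.
    have hk' : 2 < k := hk.
    by rewrite e1 e2 !add1n !ltnS in hk'.
  by case/card_gt0P => w; rewrite !inE => /and3P [wv wu wL]; exists w.
have Mw : forall j, act j -> j \in MM w.
  move=> j hj; apply: contraT => h; move: (onlyuv j w hj wL h).
  by rewrite (negbTE wu) (negbTE wv).
have inact : forall l e, ~~ act l -> e \in L -> l \notin MM e.
  move=> l e nal eL; apply/negP => lM.
  have vw : v != w by rewrite eq_sym.
  move/negP: vw; apply; apply/eqP; apply: (Adist j1) => //.
  - by apply: m1; rewrite // eq_sym.
  - by apply: m1.
  - by rewrite (AeqL l e nal eL lM v vL) (AeqL l e nal eL lM w wL).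
have typeu : forall j, act j -> j \notin MM u -> blk u j = blk u j1.
  move=> j hj h; apply: (AGREE j j1 u) => // q qL' qu.
  by rewrite !bM //; [apply: m1 | apply: (movx j u)].
have typev : forall j, act j -> j \notin MM v -> blk v j = blk v j2.
  move=> j hj h; apply: (AGREE j j2 v) => // q qL' qv.
  by rewrite !bM //; [apply: m2 | apply: (movx j v)].
have uorv : forall j, act j -> (j \in MM u) || (j \in MM v).
  move=> j hj; apply: contraT; rewrite negb_or => /andP [h1 h2].
  have [e eL he] := exc j hj.
  have eu : e = u by apply: (uniqX j) => //; apply: bXx.
  have ev : e = v by apply: (uniqX j) => //; apply: bXx.
  by move: uv; rewrite -eu -ev eqxx.
have notboth : forall j, ~~ ((j \in MM u) && (j \in MM v)).
  move=> j; apply/negP => /andP [h1 h2].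
  case: (boolP (act j)) => hj; last by move: h1; rewrite (negbTE (inact j u hj uL)).
  have [e eL he] := exc j hj.
  by case/orP: (onlyuv j e hj eL he) => /eqP ee; move: he; rewrite ee ?h1 ?h2.
have GGb : forall q j, q \in L -> j \notin MM q -> GG q j = blk q j.
  by move=> q j qL' h; rewrite blkE // (negbTE h).
have GGi : forall q j, ~~ act j -> q \in L -> GG q j = blk u j.
  move=> q j nal qL'; rewrite GGb //; last by apply: inact.
  apply/eqP; apply: contraNT nal => h; apply/exists_inP; exists q => //; apply/exists_inP; by exists u.
set pu := blk u j1. set pv := blk v j2.
have puX : pu \in X by apply: bX.
have pvX : pv \in X by apply: bX.
have C1 : line_pt (MM u) (GG u) pu = line_pt (MM w) (GG w) pu.
  apply/ffunP => j; rewrite !ffunE; case: (boolP (act j)) => hj.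
    rewrite Mw //; case: ifP => // /negbT h; by rewrite GGb // typeu.
  by rewrite (negbTE (inact j u hj uL)) (negbTE (inact j w hj wL)) !GGi.
have C2 : line_pt (MM v) (GG v) pv = line_pt (MM w) (GG w) pv.
  apply/ffunP => j; rewrite !ffunE; case: (boolP (act j)) => hj.
    rewrite Mw //; case: ifP => // /negbT h; by rewrite GGb // typev.
  by rewrite (negbTE (inact j v hj vL)) (negbTE (inact j w hj wL)) !GGi.
have C3 : line_pt (MM u) (GG u) pv = line_pt (MM v) (GG v) pu.
  apply/ffunP => j; rewrite !ffunE; case: (boolP (act j)) => hj.
    have := notboth j; case/orP: (uorv j hj) => h; rewrite h ?andbT /= => /negbTE h'; rewrite h'.
      have nv : j \notin MM v by rewrite h'.
      by rewrite GGb // (typev j hj nv).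
    have nu : j \notin MM u by rewrite h'.
    by rewrite GGb // (typeu j hj nu).
  by rewrite (negbTE (inact j u hj uL)) (negbTE (inact j v hj vL)) !GGi.
have fuL : (f u).1 \in calL by case: (hf u uL).
have fvL : (f v).1 \in calL by case: (hf v vL).
have fwL : (f w).1 \in calL by case: (hf w wL).
have hj1w : j1 \in MM w by apply: Mw.
have hj2w : j2 \in MM w by apply: Mw.
have hj1v : j1 \in MM v by apply: m1; rewrite // eq_sym.
have dist : forall q q', q \in L -> q' \in L -> forall j, j \in MM q -> j \notin MM q' ->
    line_of X (f q).1.1 (f q).1.2 != line_of X (f q').1.1 (f q').1.2.
  move=> q q' qL' q'L j h h'; apply/negP => /eqP e.
  have hq1 : (f q).1 \in calL by case: (hf q qL').
  have hq2 : (f q').1 \in calL by case: (hf q' q'L).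
  have := hdist _ _ hq1 hq2 e.
  by move=> ee; move: h'; rewrite /MM -ee h.
have dwu := dist w u wL uL j1 hj1w hu.
have dwv := dist w v wL vL j2 hj2w hv.
have duv := dist v u vL uL j1 hj1v hu.
have inl : forall q t, t \in X -> line_pt (MM q) (GG q) t \in line_of X (f q).1.1 (f q).1.2.
  by move=> q t tX; apply: imset_f.
have [epu | npu] := eqVneq pu pv.
  apply: (htri (f w).1 (f u).1 (f v).1 fwL fuL fvL).
  split; first by split => //; rewrite eq_sym.
  split.
    apply/set0Pn; exists (line_pt (MM w) (GG w) pu).
    have p1 := inl w pu puX.
    have p2 : line_pt (MM w) (GG w) pu \in line_of X (f u).1.1 (f u).1.2 by rewrite -C1 inl.
    have p3 : line_pt (MM w) (GG w) pu \in line_of X (f v).1.1 (f v).1.2 by rewrite epu -C2 inl.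
    by rewrite !inE p1 p2 p3.
  split.
    apply/setP => j; rewrite inE; case: (boolP (act j)) => hj.
      by rewrite /= Mw // uorv.
    by rewrite /= (negbTE (inact j w hj wL)) (negbTE (inact j u hj uL)) (negbTE (inact j v hj vL)).
  by rewrite -setI_eq0; apply/eqP/setP => j; rewrite !inE (negbTE (notboth j)).
apply: (htria (f w).1 (f u).1 (f v).1 fwL fuL fvL).
split; first by split => //; rewrite eq_sym.
split.
  split; apply/set0Pn.
  - by exists (line_pt (MM w) (GG w) pu); rewrite inE inl //= -C1 inl.
  - by exists (line_pt (MM w) (GG w) pv); rewrite inE inl //= -C2 inl.
  - by exists (line_pt (MM u) (GG u) pv); rewrite inE inl //= C3 inl.
apply/setP => r; rewrite !inE; apply/negP => /andP [/andP [/imsetP [t _ ->] /imsetP [t' _ e1]] /imsetP [t'' _ e2]].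
move/ffunP: e1 => /(_ j1); rewrite !ffunE hj1w (negbTE hu) GGb // => et.
move/ffunP: e2 => /(_ j2); rewrite !ffunE hj2w (negbTE hv) GGb // => et'.
by move: npu; rewrite /pu /pv -et -et' eqxx.
Qed.
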